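(* Let $F$ attain its minimum $F^*$ at some $x^*\in\operatorname{dom}h$. Let $x_0\in\mathbb{E}$, let $(a_k)_{k\ge1}$ be positive numbers and $(\delta_k)_{k\ge1}$ nonnegative numbers. Suppose that for each $k\ge0$, points $x_{k+1}$ and vectors $g_{k+1}\in\partial\Phi_{k+1}(x_{k+1})$ are given, where $\Phi_{k+1}(x)=a_{k+1}F(x)+\frac12\|x-x_k\|^2$, such that $\|g_{k+1}\|_*\le\delta_{k+1}$, and set $F'(x_{k+1})=\frac1{a_{k+1}}\big(g_{k+1}-B(x_{k+1}-x_k)\big)\in\partial F(x_{k+1})$. Then for every $k\ge1$, $$\sum_{i=1}^ka_i(F(x_i)-F^* )+\frac12\sum_{i=1}^ka_i^2\|F'(x_i)\|_*^2+\frac12\|x_k-x^*\|^2\le\frac12\Big(\|x_0-x^*\|+\sum_{i=1}^k\delta_i\Big)^2.$$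
   Context: $\mathbb{E}$ is a finite-dimensional real vector space with dual $\mathbb{E}^*$; $B:\mathbb{E}\to\mathbb{E}^*$ is a fixed self-adjoint positive-definite operator, $\|x\|=\langle Bx,x\rangle^{1/2}$, $\|g\|_*=\langle g,B^{-1}g\rangle^{1/2}$. $F=f+h$, where $h:\mathbb{E}\to\mathbb{R}\cup\{+\infty\}$ is proper closed convex and $f$ is convex and $p$ times differentiable ($p\ge2$) on an open convex set containing $\operatorname{dom}h$ with Lipschitz continuous $p$-th derivative on $\operatorname{dom}h$. $\partial$ denotes the convex subdifferential. *)

(* Defs.v *)
From HB Require Import structures.
From mathcomp Require Import all_boot all_order all_algebra.
From mathcomp Require Import mathcomp_extra boolp classical_sets reals constructive_ereal ereal topology normedtype sequences.
Set Implicit Arguments. Unset Strict Implicit. Unset Printing Implicit Defensive.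
Import Order.TTheory GRing.Theory Num.Theory.
Import numFieldNormedType.Exports.
Local Open Scope ring_scope.
Local Open Scope classical_set_scope.

(* The space E is modelled as column vectors 'cV[R]_n; its dual E^* is also
   'cV[R]_n, with the duality pairing <g, x> = g^T x. *)
Section Defs.
Variables (R : realType) (n : nat).
Local Notation E := 'cV[R]_n.

Definition pair (g x : E) : R := (g^T *m x) ord0 ord0.

Definition self_adjoint_posdef (B : 'M[R]_n) : Prop :=
  B^T = B /\ forall x : E, x != 0 -> 0 < pair (B *m x) x.

Definition normE (B : 'M[R]_n) (x : E) : R := Num.sqrt (pair (B *m x) x).
Definition dnormE (B : 'M[R]_n) (g : E) : R := Num.sqrt (pair g (invmx B *m g)).

(* convergence of a sequence of vectors (coordinatewise = in any norm) *)
Definition vcvg (u : nat -> E) (y : E) : Prop :=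
  forall i : 'I_n, (fun k => u k i ord0) @ \oo --> y i ord0.

Definition vopen (U : set E) : Prop :=
  forall y, U y -> exists2 e : R, 0 < e &
    forall z : E, (forall i : 'I_n, `|z i ord0 - y i ord0| < e) -> U z.

Definition convex_set (U : set E) : Prop :=
  forall (y z : E) (t : R), U y -> U z -> 0 <= t <= 1 -> U (t *: y + (1 - t) *: z).

Definition convex_efun (h : E -> \bar R) : Prop :=
  forall (y z : E) (t : R), 0 <= t <= 1 ->
    (h (t *: y + (1 - t) *: z)%R <= t%:E * h y + (1 - t)%R%:E * h z)%E.

Definition proper_fun (h : E -> \bar R) : Prop :=
  (forall y, h y != -oo%E) /\ exists y, (h y < +oo)%E.

(* closed = lower semicontinuous = closed epigraph (sequential form) *)
Definition closed_fun (h : E -> \bar R) : Prop :=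
  forall (u : nat -> E) (y : E) (s : nat -> R) (t : R),
    vcvg u y -> s @ \oo --> t ->
    (forall k, (h (u k) <= (s k)%:E)%E) -> (h y <= t%:E)%E.

Definition dom (h : E -> \bar R) : set E := [set y | (h y < +oo)%E].

Definition convex_on (U : set E) (f : E -> R) : Prop :=
  forall (y z : E) (t : R), U y -> U z -> 0 <= t <= 1 ->
    f (t *: y + (1 - t) *: z) <= t * f y + (1 - t) * f z.

Definition subdiff (F : E -> \bar R) (y g : E) : Prop :=
  (F y < +oo)%E /\ forall z, (F y + (pair g (z - y)%R)%:E <= F z)%E.

End Defs.

(* Main.v *)
Require Import Defs.
From HB Require Import structures.
From mathcomp Require Import all_boot all_order all_algebra.
From mathcomp Require Import mathcomp_extra boolp classical_sets reals constructive_ereal ereal topology normedtype sequences.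
From mathcomp Require Import ring lra.
Import Order.TTheory GRing.Theory Num.Theory.
Import numFieldNormedType.Exports.
Local Open Scope ring_scope.
Local Open Scope classical_set_scope.

Section Aux.
Variables (R : realType) (n : nat).
Local Notation E := 'cV[R]_n.

Lemma pairE (g x : E) : pair g x = \sum_j g j ord0 * x j ord0.
Proof. by rewrite /pair !mxE; apply: eq_bigr => j _; rewrite mxE. Qed.

Lemma pairDl (g1 g2 x : E) : pair (g1 + g2) x = pair g1 x + pair g2 x.
Proof. by rewrite !pairE -big_split; apply: eq_bigr => j _; rewrite mxE mulrDl. Qed.
Lemma pairDr (g x1 x2 : E) : pair g (x1 + x2) = pair g x1 + pair g x2.
Proof. by rewrite !pairE -big_split; apply: eq_bigr => j _; rewrite mxE mulrDr. Qed.
Lemma pairZl c (g x : E) : pair (c *: g) x = c * pair g x.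
Proof. by rewrite !pairE mulr_sumr; apply: eq_bigr => j _; rewrite mxE mulrA. Qed.
Lemma pairZr c (g x : E) : pair g (c *: x) = c * pair g x.
Proof. by rewrite !pairE mulr_sumr; apply: eq_bigr => j _; rewrite mxE mulrCA. Qed.
Lemma pairNl (g x : E) : pair (- g) x = - pair g x.
Proof. by rewrite -scaleN1r pairZl mulN1r. Qed.
Lemma pairNr (g x : E) : pair g (- x) = - pair g x.
Proof. by rewrite -scaleN1r pairZr mulN1r. Qed.
Lemma pairBl (g1 g2 x : E) : pair (g1 - g2) x = pair g1 x - pair g2 x.
Proof. by rewrite pairDl pairNl. Qed.
Lemma pairBr (g x1 x2 : E) : pair g (x1 - x2) = pair g x1 - pair g x2.
Proof. by rewrite pairDr pairNr. Qed.
Lemma pairC (g x : E) : pair g x = pair x g.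
Proof. by rewrite !pairE; apply: eq_bigr => j _; rewrite mulrC. Qed.
Lemma pair_mulmx (A : 'M[R]_n) (u v : E) : pair (A *m u) v = pair u (A^T *m v).
Proof. by rewrite /pair trmx_mul mulmxA. Qed.
Lemma pair0r (g : E) : pair g 0 = 0.
Proof. by rewrite pairE big1 // => j _; rewrite mxE mulr0. Qed.

Variable B : 'M[R]_n.
Hypothesis HB : self_adjoint_posdef B.

Definition bf (u v : E) := pair (B *m u) v.
Lemma bC u v : bf u v = bf v u.
Proof. by rewrite /bf pair_mulmx (proj1 HB) pairC. Qed.
Lemma bDl u1 u2 v : bf (u1 + u2) v = bf u1 v + bf u2 v.
Proof. by rewrite /bf mulmxDr pairDl. Qed.
Lemma bDr u v1 v2 : bf u (v1 + v2) = bf u v1 + bf u v2.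
Proof. by rewrite /bf pairDr. Qed.
Lemma bZl c u v : bf (c *: u) v = c * bf u v.
Proof. by rewrite /bf -scalemxAr pairZl. Qed.
Lemma bZr c u v : bf u (c *: v) = c * bf u v.
Proof. by rewrite /bf pairZr. Qed.
Lemma bNl u v : bf (- u) v = - bf u v.
Proof. by rewrite -scaleN1r bZl mulN1r. Qed.
Lemma bNr u v : bf u (- v) = - bf u v.
Proof. by rewrite -scaleN1r bZr mulN1r. Qed.
Lemma bBl u1 u2 v : bf (u1 - u2) v = bf u1 v - bf u2 v.
Proof. by rewrite bDl bNl. Qed.
Lemma bBr u v1 v2 : bf u (v1 - v2) = bf u v1 - bf u v2.
Proof. by rewrite bDr bNr. Qed.

Lemma q_ge0 u : 0 <= bf u u.
Proof.
have [->|u0] := eqVneq u 0; first by rewrite /bf mulmx0 pair0r.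
exact: ltW (proj2 HB u u0).
Qed.

Lemma q_eq0 u : bf u u = 0 -> u = 0.
Proof.
move=> h; apply/eqP; apply/negPn/negP => u0.
by have := proj2 HB u u0; rewrite -/(bf u u) h ltxx.
Qed.

Lemma normE_sqr u : normE B u ^+ 2 = bf u u.
Proof. by rewrite /normE sqr_sqrtr // q_ge0. Qed.

Lemma normE_ge0 u : 0 <= normE B u.
Proof. exact: sqrtr_ge0. Qed.

Lemma B_unit : B \in unitmx.
Proof.
rewrite unitmxE unitfE; apply/negP => /det0P [v v0 vB].
have h : B *m v^T = 0.
  by rewrite -[B](proj1 HB) -trmx_mul vB trmx0.
have := @q_eq0 v^T; rewrite /bf h pairC pair0r => /(_ erefl) /eqP.
by rewrite -(inj_eq (@trmx_inj _ _ _)) trmxK trmx0 (negPf v0).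
Qed.

Lemma bCS u v : bf u v <= Num.sqrt (bf u u) * Num.sqrt (bf v v).
Proof.
suff h : bf u v ^+ 2 <= bf u u * bf v v.
  rewrite -sqrtrM ?q_ge0 //; apply: le_trans (ler_norm _) _.
  by rewrite -sqrtr_sqr ler_sqrt // mulr_ge0 // q_ge0.
have [v0|vp] := eqVneq (bf v v) 0.
  by rewrite (@q_eq0 v v0) /bf mulmx0 pair0r pair0r expr0n mulr0.
have vpos : 0 < bf v v by rewrite lt_def vp q_ge0.
set t := bf u v / bf v v.
have := q_ge0 (u - t *: v).
rewrite bBl !bBr !bZl !bZr (bC v u) => H.
have e : t * bf v v = bf u v by rewrite /t divfK.
have : 0 <= bf u u - bf u v * t by nra.
rewrite /t => H2.
have : 0 <= (bf u u - bf u v * (bf u v / bf v v)) * bf v v by apply: mulr_ge0 => //; exact: ltW.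
rewrite mulrBl -!mulrA mulVf // mulr1; lra.
Qed.


Lemma limit0 (K C : R) : 0 <= C -> (forall t, 0 < t <= 1 -> K <= t * C) -> K <= 0.
Proof.
move=> C0 H; rewrite leNgt; apply/negP => K0.
have s0 : 0 < K + C + 1 by lra.
have := H (K / (K + C + 1)).
have t0 : 0 < K / (K + C + 1) by rewrite divr_gt0.
have t1 : K / (K + C + 1) <= 1 by rewrite ler_pdivrMr // mul1r; lra.
move=> /(_ (introT andP (conj t0 t1))).
rewrite -(ler_pM2r s0) mulrAC divfK ?gt_eqF // => h.
nra.
Qed.

Definition dq (v : E) := pair v (invmx B *m v).

Lemma dq_b v : dq v = bf (invmx B *m v) (invmx B *m v).
Proof. by rewrite /dq /bf mulmxA mulmxV ?B_unit // mul1mx. Qed.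

Lemma dnormE_sqr v : dnormE B v ^+ 2 = dq v.
Proof. by rewrite /dnormE sqr_sqrtr // -/(dq v) dq_b q_ge0. Qed.

Lemma dnormE_ge0 v : 0 <= dnormE B v.
Proof. exact: sqrtr_ge0. Qed.

Lemma dqZ c v : dq (c *: v) = c ^+ 2 * dq v.
Proof. by rewrite /dq -scalemxAr pairZl pairZr mulrA expr2. Qed.

Lemma dq_sub g u : dq (g - B *m u) = dq g - 2 * pair g u + bf u u.
Proof.
rewrite /dq mulmxBr mulmxA mulVmx ?B_unit // mul1mx pairBl !pairBr.
rewrite pair_mulmx (proj1 HB) mulmxA mulmxV ?B_unit // mul1mx -/(bf u u).
rewrite (pairC u g); ring.
Qed.

Lemma pairCS g y : pair g y <= dnormE B g * normE B y.
Proof.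
have -> : pair g y = bf (invmx B *m g) y by rewrite /bf mulmxA mulmxV ?B_unit // mul1mx.
by rewrite /dnormE -/(dq g) dq_b; apply: bCS.
Qed.

Lemma step (Fx Fs : R) (x' xk xs g : E) (a : R) :
 0 < a ->
 (forall t, 0 < t <= 1 -> a * Fx + 2^-1 * normE B (x' - xk) ^+ 2
     + pair g (t *: xs + (1 - t) *: x' - x')
   <= a * (t * Fs + (1 - t) * Fx) + 2^-1 * normE B (t *: xs + (1 - t) *: x' - xk) ^+ 2) ->
 a * (Fx - Fs) + 2^-1 * (a ^+ 2 * dnormE B (a^-1 *: (g - B *m (x' - xk))) ^+ 2)
   + 2^-1 * normE B (x' - xs) ^+ 2
 <= 2^-1 * (normE B (xk - xs) + dnormE B g) ^+ 2.
Proof.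
move=> a0 H.
have [u eu] : {u | u = x' - xk} by exists (x' - xk).
have [r er] : {r | r = x' - xs} by exists (x' - xs).
have [d edd] : {d | d = xs - x'} by exists (xs - x').
rewrite -eu -er.
rewrite -eu in H.
have key : a * (Fx - Fs) - (bf u d - pair g d) <= 0.
  apply: (@limit0 _ (2^-1 * bf d d)); first by rewrite mulr_ge0 ?q_ge0.
  move=> t /andP[t0 t1]; have := H t (introT andP (conj t0 t1)).
  have -> : t *: xs + (1 - t) *: x' - x' = t *: d.
    by rewrite edd; apply/matrixP => i j; rewrite !mxE; ring.
  have -> : t *: xs + (1 - t) *: x' - xk = u + t *: d.
    by rewrite edd eu; apply/matrixP => i j; rewrite !mxE; ring.
  rewrite !normE_sqr (bDl u) (bDr (u)) (bDr (t *: d)) !bZl !bZr (bC d u) pairZr => h.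
  rewrite -(ler_pM2l t0); nra.
have ed : d = - r by rewrite edd er; apply/matrixP => i j; rewrite !mxE; ring.
have ek : xk - xs = r - u by rewrite er eu; apply/matrixP => i j; rewrite !mxE; ring.
rewrite ed bNr pairNr in key.
rewrite dnormE_sqr dqZ dq_sub exprVn mulrA mulfV ?expf_neq0 ?gt_eqF // mul1r.
have cs := pairCS g (xk - xs).
have dg := dnormE_sqr g.
have nk := normE_sqr (xk - xs).
rewrite ek bBl !bBr (bC r u) in nk.
rewrite ek pairBr in cs.
rewrite ek.
rewrite sqrrD (normE_sqr r) nk dg.
idtac.
lra.
Qed.

End Aux.

Theorem theorem5 (R : realType) (n : nat) (B : 'M[R]_n)
  (f : 'cV[R]_n -> R) (h : 'cV[R]_n -> \bar R) (U : set 'cV[R]_n)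
  (xstar x0 : 'cV[R]_n) (x g : nat -> 'cV[R]_n) (a delta : nat -> R) :
  self_adjoint_posdef B ->
  proper_fun h -> convex_efun h -> closed_fun h ->
  vopen U -> convex_set U -> dom h `<=` U -> convex_on U f ->
  let F := fun y => ((f y)%:E + h y)%E in
  dom h xstar -> (forall y, (F xstar <= F y)%E) ->
  x 0%N = x0 ->
  (forall k, 0 < a k.+1) -> (forall k, 0 <= delta k.+1) ->
  (forall k, subdiff
     (fun y => ((a k.+1)%:E * F y + (2^-1 * normE B (y - x k)%R ^+ 2)%R%:E)%E)
     (x k.+1) (g k.+1)) ->
  (forall k, dnormE B (g k.+1) <= delta k.+1) ->
  let F' := fun i => (a i)^-1 *: (g i - B *m (x i - x i.-1)) in
  forall k, (1 <= k)%N ->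
    ((\sum_(1 <= i < k.+1) (a i)%:E * (F (x i) - F xstar))
     + (2^-1 * \sum_(1 <= i < k.+1) (a i ^+ 2 * dnormE B (F' i) ^+ 2))%:E
     + (2^-1 * normE B (x k - xstar) ^+ 2)%:E
     <= (2^-1 * (normE B (x0 - xstar) + \sum_(1 <= i < k.+1) delta i) ^+ 2)%:E)%E.
Proof.
move=> HB hprop hconv _ _ _ hU fconv F domxs Fmin x00 apos dpos Hsub Hdel F' k k1.
have hfin : forall y, (h y < +oo)%E -> h y = (fine (h y))%:E.
  move=> y hy; rewrite fineK // fin_numE (proj1 hprop y) /=.
  by rewrite lt_neqAle in hy; case/andP: hy.
pose Fr y := f y + fine (h y).
have FE : forall y, (h y < +oo)%E -> F y = (Fr y)%:E.
  by move=> y hy; rewrite /F (hfin y hy) /Fr EFinD.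
have dx : forall i, (h (x i.+1) < +oo)%E.
  move=> i; have [hlt _] := Hsub i.
  case E: (h (x i.+1)) => [r| |].
  - exact: ltry.
  - move: hlt; rewrite /F E addey // gt0_muley ?lte_fin // addye //.
  - by have := proj1 hprop (x i.+1); rewrite E.
have Hstep : forall i, a i.+1 * (Fr (x i.+1) - Fr xstar)
    + 2^-1 * (a i.+1 ^+ 2 * dnormE B (F' i.+1) ^+ 2)
    + 2^-1 * normE B (x i.+1 - xstar) ^+ 2
    <= 2^-1 * (normE B (x i - xstar) + delta i.+1) ^+ 2.
  move=> i.
  apply: le_trans.
    apply: (@step _ _ B HB (Fr (x i.+1)) (Fr xstar) (x i.+1) (x i) xstar (g i.+1) (a i.+1)).
      exact: apos.
    move=> t /andP[t0 t1].
    set z := t *: xstar + (1 - t) *: x i.+1.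
    have t01 : 0 <= t <= 1 by rewrite (ltW t0) t1.
    have hz : (h z <= (t * fine (h xstar) + (1 - t) * fine (h (x i.+1)))%:E)%E.
      apply: le_trans (hconv _ _ _ t01) _.
      by rewrite (hfin _ domxs) (hfin _ (dx i)) /= -!EFinM -EFinD.
    have hzf : (h z < +oo)%E by apply: le_lt_trans hz _; exact: ltry.
    have fz : f z <= t * f xstar + (1 - t) * f (x i.+1).
      by apply: fconv => //; apply: hU => //; exact: dx.
    have [_ Hs] := Hsub i.
    have := Hs z.
    rewrite !FE // -!EFinM -!EFinD lee_fin => Hr.
    apply: le_trans Hr _.
    rewrite (hfin _ hzf) /= in hz.
    rewrite lee_fin in hz.
    have := apos i; rewrite /Fr /z; nra.
  rewrite /=.
  have := Hdel i; have := @dnormE_ge0 _ _ B (g i.+1); have := @normE_ge0 _ _ B (x i - xstar).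
  have := dpos i; nra.
have Fxs : forall i, F (x i.+1) = (Fr (x i.+1))%:E by move=> i; exact: FE.
have Fs : F xstar = (Fr xstar)%:E by exact: FE.
have Fge : forall i, Fr xstar <= Fr (x i.+1).
  by move=> i; have := Fmin (x i.+1); rewrite Fxs Fs lee_fin.
have claim : forall m,
    \sum_(1 <= i < m.+1) (a i * (Fr (x i) - Fr xstar))
    + 2^-1 * \sum_(1 <= i < m.+1) (a i ^+ 2 * dnormE B (F' i) ^+ 2)
    + 2^-1 * normE B (x m - xstar) ^+ 2
    <= 2^-1 * (normE B (x0 - xstar) + \sum_(1 <= i < m.+1) delta i) ^+ 2.
  elim=> [|m IH].
    by rewrite !big_geq // mulr0 addr0 !add0r x00 sqrrD; have := @normE_ge0 _ _ B (x0 - xstar); nra.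
  rewrite !(big_nat_recr m.+1) //=.
  have S1 : 0 <= \sum_(1 <= i < m.+1) (a i * (Fr (x i) - Fr xstar)).
    rewrite big_nat_cond; apply: sumr_ge0 => -[|i] /andP[/andP[//= _ _] _].
    by apply: mulr_ge0; [exact: ltW (apos i) | rewrite subr_ge0 Fge].
  have S2 : 0 <= \sum_(1 <= i < m.+1) (a i ^+ 2 * dnormE B (F' i) ^+ 2).
    by apply: sumr_ge0 => i _; rewrite mulr_ge0 // sqr_ge0.
  have D0 : 0 <= \sum_(1 <= i < m.+1) delta i.
    rewrite big_nat_cond; apply: sumr_ge0 => -[|i] /andP[/andP[//= _ _] _].
  have N0 := @normE_ge0 _ _ B (x m - xstar).
  have N00 := @normE_ge0 _ _ B (x0 - xstar).
  have hN : normE B (x m - xstar) <= normE B (x0 - xstar) + \sum_(1 <= i < m.+1) delta i.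
    nra.
  have := Hstep m; have := dpos m.
  move: IH hN S1 S2 D0 N0 N00.
  set s1 := \sum_(1 <= i < m.+1) (a i * (Fr (x i) - Fr xstar)).
  set s2 := \sum_(1 <= i < m.+1) (a i ^+ 2 * dnormE B (F' i) ^+ 2).
  set d := \sum_(1 <= i < m.+1) delta i.
  set N := normE B (x m - xstar).
  set r0 := normE B (x0 - xstar).
  move=> IH hN S1 S2 D0 N0 N00 dp st.
  have : 0 <= (r0 + d - N) * delta m.+1 by apply: mulr_ge0 => //; rewrite subr_ge0.
  rewrite !sqrrD in IH st *.
  lra.
have -> : (\sum_(1 <= i < k.+1) (a i)%:E * (F (x i) - F xstar) =
    (\sum_(1 <= i < k.+1) (a i * (Fr (x i) - Fr xstar)))%:E)%E.
  rewrite -sumEFin; apply: eq_big_nat => -[|i] // _.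
  by rewrite Fxs Fs -EFinB -EFinM.
by rewrite -!EFinD lee_fin; exact: claim.
Qed.
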